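(* Consider the protocol ABBBA described in the context, with $n\ge 3t+1$, in which every honest node receives an input pair $(a,b)\in\{0,1\}^2$. Then: (i) (Conditional termination) If the inputs satisfy the condition ''if some honest node has $b=1$, then at least $t+1$ honest nodes have $a=1$'', then every honest node eventually outputs a value and terminates. (ii) (Biased validity) If at least $t+1$ honest nodes have $b=1$, then every honest node that terminates outputs $1$. (iii) (Biased integrity) If some honest node outputs $1$, then at least one honest node has input $a=1$ or $b=1$.
   Context: Model: $n$ nodes in an asynchronous network (messages between honest nodes are eventually delivered, with arbitrary delay), at most $t$ of which are Byzantine (controlled by an adaptive adversary), $n\ge 3t+1$. Protocol ABBBA (asynchronous biased binary Byzantine agreement), code for an honest node with input $(a,b)\in\{0,1\}^2$: initialize counters $c_a=c_b=c_c=0$. Send $(\mathrm{VALUE},a,b)$ to all nodes. If $a=1$ or $b=1$, output $1$ and terminate. Otherwise wait until one of: $c_a\ge t+1$, $c_b\ge t+1$, or $c_c\ge n-t$; if $c_a\ge t+1$ or $c_b\ge t+1$, output $1$ and terminate; else (i.e. $c_c\ge n-t$) output $0$ and terminate. Counter updates: upon receiving the first message $(\mathrm{VALUE},a',b')$ with $a',b'\in\{0,1\}$ from a given node, set $c_a\leftarrow c_a+a'$, $c_b\leftarrow c_b+b'$, and if $b'=0$ set $c_c\leftarrow c_c+1$ (later VALUE messages from the same node are ignored). *)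

(* Defs.v *)
From mathcomp Require Import all_boot.
Set Implicit Arguments. Unset Strict Implicit. Unset Printing Implicit Defensive.

(* A message payload (VALUE, a', b'); payloads are arbitrary naturals so that
   Byzantine nodes may send malformed values (a', b' not in {0,1}). *)
Definition payload := (nat * nat)%type.

(* The receive trace of a node: at each step it receives at most one message,
   tagged with its (authenticated) sender. *)
Definition trace (n : nat) := nat -> option ('I_n * payload).

Fixpoint first_valid n (r : trace n) (tau : nat) (k : 'I_n) : option payload :=
  match tau with
  | 0 => None
  | tau'.+1 =>
      match first_valid r tau' k with
      | Some m => Some m
      | None =>
          match r tau' with
          | Some (k', (x, y)) =>
              if [&& k' == k, x <= 1 & y <= 1] then Some (x, y) else None
          | None => None
          end
      end
  end.

Definition c_a n (r : trace n) tau : nat :=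
  #|[set k : 'I_n | if first_valid r tau k is Some (x, _) then x == 1 else false]|.
Definition c_b n (r : trace n) tau : nat :=
  #|[set k : 'I_n | if first_valid r tau k is Some (_, y) then y == 1 else false]|.
Definition c_c n (r : trace n) tau : nat :=
  #|[set k : 'I_n | if first_valid r tau k is Some (_, y) then y == 0 else false]|.

Definition ready n (t : nat) (r : trace n) tau : bool :=
  [|| t.+1 <= c_a r tau, t.+1 <= c_b r tau | n - t <= c_c r tau].

Definition outputs n (t : nat) (a b : bool) (r : trace n) (v : bool) : Prop :=
  ((a || b) /\ v = true) \/
  (~~ (a || b) /\ exists tau, [/\ ready t r tau,
        (forall tau', tau' < tau -> ~~ ready t r tau') &
        v = (t.+1 <= c_a r tau) || (t.+1 <= c_b r tau)]).

(* Admissible asynchronous execution: H is the set of honest nodes, a b their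
   inputs, r j the receive trace of node j.  Every honest node i sends
   (VALUE, a i, b i) to all nodes, so every message an honest j receives from an
   honest i carries that payload, and it is eventually delivered.  Messages
   from Byzantine nodes (outside H) are arbitrary. *)
Definition execution n (H : {set 'I_n}) (a b : 'I_n -> bool) (r : 'I_n -> trace n)
  : Prop :=
  forall j, j \in H ->
    (forall tau i m, i \in H -> r j tau = Some (i, m) ->
        m = (nat_of_bool (a i), nat_of_bool (b i))) /\
    (forall i, i \in H -> exists tau,
        r j tau = Some (i, (nat_of_bool (a i), nat_of_bool (b i)))).

(* Main.v *)
Require Import Defs.
From mathcomp Require Import all_boot.
From mathcomp Require Import zify.

Lemma fv_src n (r : trace n) tau k m :
  first_valid r tau k = Some m -> exists2 tau', tau' < tau & r tau' = Some (k, m).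
Proof.
elim: tau => [|tau IH] //=.
case E: (first_valid r tau k) => [m'|].
  move=> [em]; subst m'; have [t' lt Ht'] := IH E; exists t' => //; exact: ltnW.
case R: (r tau) => [[k' [x y]]|] //.
case: ifP => // /and3P [/eqP ek _ _] [em]; subst; by exists tau.
Qed.

Lemma fv_some n (r : trace n) tau tau' k x y :
  tau' < tau -> r tau' = Some (k, (x, y)) -> x <= 1 -> y <= 1 ->
  exists m, first_valid r tau k = Some m.
Proof.
elim: tau => [|tau IH] //= lt R hx hy.
case E: (first_valid r tau k) => [m'|]; first by exists m'.
rewrite ltnS leq_eqVlt in lt; case/orP: lt => [/eqP eq|lt].
  subst; rewrite R eqxx hx hy /=; by exists (x, y).
by have [m Hm] := IH lt R hx hy; rewrite Hm in E.
Qed.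

Lemma nb1 (c : bool) : nat_of_bool c <= 1.
Proof. by case: c. Qed.

Lemma fv_honest n (H : {set 'I_n}) a b r j tau k m :
  execution H a b r -> j \in H -> k \in H ->
  first_valid (r j) tau k = Some m -> m = (nat_of_bool (a k), nat_of_bool (b k)).
Proof.
move=> ex hj hk /fv_src [t' _ R].
have [h1 _] := ex j hj; exact: h1 R.
Qed.

Lemma some_honest n (H A : {set 'I_n}) t :
  t < #|A| -> #|~: H| <= t -> exists2 k, k \in A & k \in H.
Proof.
move=> hA hH.
case: (boolP [exists k, (k \in A) && (k \in H)]).
  by move/existsP=> [k /andP [h1 h2]]; exists k.
move=> /existsPn hn.
have sub : A \subset ~: H.
  apply/subsetP=> k kA; rewrite in_setC; apply/negP=> kH.
  by move: (hn k); rewrite kA kH.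
have := subset_leq_card sub; lia.
Qed.

Lemma bound_seq (I : eqType) (P : I -> nat -> Prop) (s : seq I) :
  (forall i, i \in s -> exists tau, P i tau) ->
  exists T, forall i, i \in s -> exists2 tau, tau < T & P i tau.
Proof.
elim: s => [|x s IH] h; first by exists 0.
have [T HT] : exists T, forall i, i \in s -> exists2 tau, tau < T & P i tau.
  by apply: IH => i hi; apply: h; rewrite in_cons hi orbT.
have [tx Htx] := h x (mem_head _ _).
exists (maxn T tx.+1) => i; rewrite in_cons => /orP [/eqP ->|hi].
  exists tx => //; exact: leq_maxr.
have [tau lt Hp] := HT i hi; exists tau => //; apply: (leq_trans lt); exact: leq_maxl.
Qed.

Theorem lemma8 (n t : nat) (H : {set 'I_n}) (a b : 'I_n -> bool)
    (r : 'I_n -> trace n) :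
  3 * t < n ->
  #|~: H| <= t ->
  execution H a b r ->
  (* (i) conditional termination *)
  (((exists2 i, i \in H & b i) -> t.+1 <= #|[set i in H | a i]|) ->
     forall j, j \in H -> exists v, outputs t (a j) (b j) (r j) v) /\
  (* (ii) biased validity *)
  (t.+1 <= #|[set i in H | b i]| ->
     forall j v, j \in H -> outputs t (a j) (b j) (r j) v -> v = true) /\
  (* (iii) biased integrity *)
  ((exists2 j, j \in H & outputs t (a j) (b j) (r j) true) ->
     exists2 i, i \in H & a i || b i).
Proof.
move=> hn hH ex; split; [|split].
- move=> cond j hj.
  case: (boolP (a j || b j)) => hab.
    by exists true; left.
  have [T HT] : exists T, forall i, i \in enum H -> exists2 tau, tau < T &
      r j tau = Some (i, (nat_of_bool (a i), nat_of_bool (b i))).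
    apply: bound_seq => i; rewrite mem_enum => hi; exact: (ex j hj).2 i hi.
  have fvT : forall i, i \in H ->
      first_valid (r j) T i = Some (nat_of_bool (a i), nat_of_bool (b i)).
    move=> i hi; have [tau lt R] : exists2 tau, tau < T &
      r j tau = Some (i, (nat_of_bool (a i), nat_of_bool (b i))).
      by apply: HT; rewrite mem_enum.
    have [m Hm] := @fv_some n (r j) T tau i _ _ lt R (nb1 _) (nb1 _).
    by rewrite Hm (@fv_honest _ _ _ _ _ _ _ _ _ ex hj hi Hm).
  have rdy : ready t (r j) T.
    case: (boolP [exists i in H, b i]).
      move=> /exists_inP [i hi hb].
      have := cond (ex_intro2 _ _ i hi hb) => c.
      have sub : [set i in H | a i] \subset
          [set k : 'I_n | if first_valid (r j) T k is Some (x, _) then x == 1 else false].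
        apply/subsetP=> k; rewrite !inE => /andP [kH ka].
        by rewrite fvT // ka.
      have := subset_leq_card sub => c2.
      rewrite /ready /c_a; apply/orP; left; exact: leq_trans c c2.
    move=> /exists_inPn hnb.
    have sub : H \subset
        [set k : 'I_n | if first_valid (r j) T k is Some (_, y) then y == 0 else false].
      apply/subsetP=> k kH; rewrite inE fvT //.
      by have := hnb k kH; case: (b k).
    have c2 : #|H| <= c_c (r j) T by exact: subset_leq_card sub.
    have := cardsC H; rewrite card_ord => c3.
    rewrite /ready; apply/orP; right; apply/orP; right. lia.
  have exP : exists tau, ready t (r j) tau by exists T.
  exists ((t.+1 <= c_a (r j) (ex_minn exP)) || (t.+1 <= c_b (r j) (ex_minn exP))).
  right; split => //.
  case: ex_minnP => m Pm minm; exists m; split => // tau' lt; apply/negP => Pt.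
  have := minm _ Pt; lia.
- move=> hb j v hj [[_ ->] //|[hab [tau [rdy _ ->]]]].
  move: rdy; rewrite /ready => /or3P [->|->|hc] //; last first.
  exfalso.
  have sub : [set k : 'I_n | if first_valid (r j) tau k is Some (_, y) then y == 0 else false]
      \subset ~: [set i in H | b i].
    apply/subsetP=> k; rewrite !inE.
    case E: (first_valid (r j) tau k) => [[x y]|] // hy.
    apply/negP=> /andP [kH kb].
    have := @fv_honest _ _ _ _ _ _ _ _ _ ex hj kH E; rewrite kb => -[_ ey]; subst y; done.
  have c1 : c_c (r j) tau <= #|~: [set i in H | b i]| by exact: subset_leq_card sub.
  have := cardsC [set i in H | b i]; rewrite card_ord.
  move: hc; lia.
  by rewrite orbT.
- move=> [j hj [[hab _]|[hab [tau [_ _ hv]]]]]; first by exists j.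
  move: hv => /esym /orP [hc|hc].
    have [k kA kH] := @some_honest _ H _ t hc hH.
    move: kA; rewrite inE; case E: (first_valid (r j) tau k) => [[x y]|] // hx.
    have := @fv_honest _ _ _ _ _ _ _ _ _ ex hj kH E => -[ex1 _].
    exists k => //; move: hx; rewrite ex1; by case: (a k).
  have [k kA kH] := @some_honest _ H _ t hc hH.
  move: kA; rewrite inE; case E: (first_valid (r j) tau k) => [[x y]|] // hy.
  have := @fv_honest _ _ _ _ _ _ _ _ _ ex hj kH E => -[_ ex2].
  exists k => //; move: hy; rewrite ex2; case: (b k) => //; by rewrite orbT.
Qed.
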